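(* Let $G=(V,E)$ be a temporal network with nonnegative timestamps, let $\pi$ be an ordering of $V$, and let $\delta\ge 0$. Let $e=(u,v,t)\in E$ with $\pi(u)<\pi(v)$, and let $w\in N^{-}_{\pi}(u)\cap N(v)$. Put $L_2=E_{u,w}$ and $L_3=E_{v,w}$, and for $f\in L_2$ let $L_{23}[f]$ be the first edge of $L_3$ (in sorted order) whose timestamp is at least $t(f)$. Define the collection of intervals $$I_{w,u,v}=\big\{\,[\max\{0,\,t(L_{23}[f])-\delta\},\ t(f)]\ :\ f\in L_2,\ L_{23}[f]\text{ exists},\ t(f)\le t(L_{23}[f])\le t(f)+\delta\,\big\}.$$ Then $e$ forms at least one $\delta$-temporal triangle with $w$ if and only if some interval in $I_{w,u,v}$ contains $t=t(e)$.
   Context: A temporal network $G=(V,E)$ is a finite multiset of temporal edges $(x,y,t)$ with $x\neq y\in V$ and timestamp $t=t(e)$ (from $x$ to $y$; parallel edges in both directions allowed). For distinct $x,y$, $E_{x,y}$ is the list of temporal edges from $x$ to $y$ sorted by increasing timestamp. $G_S$ is the simple undirected graph on $V$ with $\{x,y\}$ an edge iff some temporal edge joins $x$ and $y$; $N(x)$ is the neighbourhood of $x$ in $G_S$. For an ordering $\pi$ of $V$, $N^{-}_{\pi}(x)=\{y\in N(x):\pi(y)<\pi(x)\}$. For $\delta\ge 0$, a temporal edge $e=(a,b,t)$ forms a $\delta$-temporal triangle with a vertex $c$ if there exist temporal edges $(a,c,t_2)$ and $(b,c,t_3)$ in $E$ with $t\le t_2\le t_3\le t+\delta$. *)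

(* Defs.v *)
From mathcomp Require Import all_boot all_order all_algebra.
Set Implicit Arguments. Unset Strict Implicit. Unset Printing Implicit Defensive.
Import Order.TTheory GRing.Theory Num.Theory.
Local Open Scope ring_scope.

Section Temporal.
Variables (R : realDomainType) (V : finType).

Definition tedge := (V * V * R)%type.
Definition src (e : tedge) : V := e.1.1.
Definition dst (e : tedge) : V := e.1.2.
Definition tm (e : tedge) : R := e.2.

Definition temporal_network (E : seq tedge) : Prop :=
  forall e, e \in E -> src e != dst e.

Definition nonneg_timestamps (E : seq tedge) : Prop :=
  forall e, e \in E -> 0 <= tm e.

Definition adjS (E : seq tedge) (x y : V) : bool :=
  has (fun e => ((src e == x) && (dst e == y)) || ((src e == y) && (dst e == x))) E.

Definition Nbr (E : seq tedge) (x : V) : pred V := fun y => adjS E x y.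

Definition Nminus (E : seq tedge) (pi : V -> nat) (x : V) : pred V :=
  fun y => adjS E x y && (pi y < pi x)%N.

Definition Exy (E : seq tedge) (x y : V) : seq tedge :=
  sort (fun e1 e2 => tm e1 <= tm e2)
       (filter (fun e => (src e == x) && (dst e == y)) E).

Definition first_geq (L : seq tedge) (f : tedge) : option tedge :=
  ohead (filter (fun g => tm f <= tm g) L).

Definition forms_triangle (E : seq tedge) (delta : R) (e : tedge) (c : V) : Prop :=
  exists e2 e3, e2 \in E /\ e3 \in E /\
    src e2 = src e /\ dst e2 = c /\ src e3 = dst e /\ dst e3 = c /\
    tm e <= tm e2 /\ tm e2 <= tm e3 /\ tm e3 <= tm e + delta.

(* the interval collection I_{w,u,v}, as a list of pairs (lo, hi) meaning [lo, hi] *)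
Definition intervals (E : seq tedge) (delta : R) (w u v : V) : seq (R * R) :=
  let L2 := Exy E u w in
  let L3 := Exy E v w in
  pmap (fun f => match first_geq L3 f with
                 | Some g => if (tm f <= tm g) && (tm g <= tm f + delta)
                             then Some (Num.max 0 (tm g - delta), tm f)
                             else None
                 | None => None
                 end) L2.

End Temporal.

(* Main.v *)
Require Import Defs.
From mathcomp Require Import all_boot all_order all_algebra.
Import Order.TTheory GRing.Theory Num.Theory.
Local Open Scope ring_scope.
Set Implicit Arguments. Unset Strict Implicit.

Section Aux.
Variables (R : realDomainType) (V : finType).
Definition lee (e1 e2 : tedge R V) : bool := tm e1 <= tm e2.

Lemma lee_trans : transitive lee.
Proof. by move=> y x z; rewrite /lee; apply: le_trans. Qed.
Lemma lee_total : total lee.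
Proof. by move=> x y; rewrite /lee le_total. Qed.

Lemma memExy (E : seq (tedge R V)) a b x : (x \in Exy E a b) = ((src x == a) && (dst x == b)) && (x \in E).
Proof. by rewrite /Exy mem_sort mem_filter. Qed.

Lemma Exy_sorted (E : seq (tedge R V)) a b : sorted lee (Exy E a b).
Proof. exact: (sort_sorted lee_total). Qed.

Lemma first_geq_some (L : seq (tedge R V)) f g : first_geq L f = Some g -> g \in L /\ tm f <= tm g.
Proof.
rewrite /first_geq.
have : forall x, x \in filter (fun g => tm f <= tm g) L -> x \in L /\ tm f <= tm x.
  by move=> x; rewrite mem_filter => /andP[].
case: filter => [//|g' s] /= H [<-]; apply: H; exact: mem_head.
Qed.

Lemma first_geq_min (L : seq (tedge R V)) f h : sorted lee L -> h \in L -> tm f <= tm h ->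
  exists g, first_geq L f = Some g /\ tm g <= tm h.
Proof.
move=> Hs hL hf; rewrite /first_geq.
have hs := sorted_filter lee_trans (fun g => tm f <= tm g) Hs.
have hin : h \in filter (fun g => tm f <= tm g) L by rewrite mem_filter hf.
move: hs hin; case: filter => [//|g s] /= hs hin.
exists g; split=> //.
rewrite in_cons in hin; case/orP: hin => [/eqP -> //|hin].
have := order_path_min lee_trans hs.
by move/allP => /(_ h hin).
Qed.
End Aux.

Theorem theorem3p4 (R : realDomainType) (V : finType) (E : seq (tedge R V))
  (pi : V -> nat) (delta : R) (e : tedge R V) (w : V) :
  temporal_network E -> nonneg_timestamps E ->
  injective pi -> 0 <= delta ->
  e \in E -> (pi (src e) < pi (dst e))%N ->
  w \in Nminus E pi (src e) -> w \in Nbr E (dst e) ->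
  forms_triangle E delta e w <->
  has (fun I : R * R => (I.1 <= tm e) && (tm e <= I.2))
      (intervals E delta w (src e) (dst e)).
Proof.
move=> _ Hnn _ Hd He _ _ _; split.
- case=> [e2 [e3 [H2 [H3 [s2 [d2 [s3 [d3 [h1 [h2 h3]]]]]]]]]].
  have e3L : e3 \in Exy E (dst e) w by rewrite memExy s3 d3 !eqxx H3.
  have [g [Hg Hgle]] := @first_geq_min R V _ e2 e3 (Exy_sorted E (dst e) w) e3L h2.
  have [gL hfg] := first_geq_some Hg.
  apply/hasP; exists (Num.max 0 (tm g - delta), tm e2).
    rewrite /intervals mem_pmap; apply/mapP; exists e2.
      by rewrite memExy s2 d2 !eqxx H2.
    rewrite Hg hfg /=.
    have -> : tm g <= tm e2 + delta.
      apply: (le_trans Hgle); apply: (le_trans h3); by rewrite lerD2r.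
    by [].
  rewrite /= h1 andbT ge_max (Hnn _ He) /=.
  rewrite lerBlDr; exact: (le_trans Hgle h3).
- move/hasP=> [[lo hi]] /=; rewrite /intervals mem_pmap => /mapP [f fL].
  case Hg: first_geq => [g|//].
  case: ifP => // /andP[hfg hgd] [-> ->] /andP[hlo hhi].
  have [gL _] := first_geq_some Hg.
  move: fL gL; rewrite !memExy => /andP[/andP[/eqP sf /eqP df] fE] /andP[/andP[/eqP sg /eqP dg] gE].
  exists f, g; do 8 (split=> //).
  move: hlo; rewrite ge_max => /andP[_]; rewrite lerBlDr addrC //.
Qed.
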